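(* There exists a $(734,25)$-arc in $\operatorname{PG}(2,31)$; hence $m_{25}(2,31)\ge 734$.
   Context: Points of $\operatorname{PG}(2,q)$ are the 1-dimensional subspaces of $\operatorname{GF}(q)^3$, lines are the 2-dimensional subspaces. An $(n,r)$-arc in $\operatorname{PG}(2,q)$ is a set $\mathcal B$ of $n$ points such that every line contains at most $r$ points of $\mathcal B$ and at least one line contains exactly $r$ points of $\mathcal B$. $m_r(2,q)$ is the maximum $n$ for which an $(n,r)$-arc in $\operatorname{PG}(2,q)$ exists. *)

(* Defs.v *)
From HB Require Import structures.
From mathcomp Require Import all_boot all_order all_algebra all_field.
Set Implicit Arguments. Unset Strict Implicit. Unset Printing Implicit Defensive.
Import GRing.Theory.
Local Open Scope ring_scope.

(* A point (1-dim subspace of F^3) is represented by a nonzero row vector u,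
   standing for its row space <<u>>; a line (2-dim subspace) is represented by a
   2x3 matrix L of rank 2, standing for its row space.  A point set B is a set of nonzero vectors no two of
   which span the same subspace (so #|B| is the number of projective points). *)

Definition PG2_line (F : finFieldType) (L : 'M[F]_(2,3)) : bool := \rank L == 2.

Definition pts_on_line (F : finFieldType) (B : {set 'rV[F]_3}) (L : 'M[F]_(2,3))
  : nat := #|[set u in B | (u <= L)%MS]|.

Definition is_arc (F : finFieldType) (n r : nat) (B : {set 'rV[F]_3}) : Prop :=
  [/\ {in B, forall u : 'rV[F]_3, u != 0},
      {in B &, forall u v : 'rV[F]_3, (u == v)%MS -> u = v},
      #|B| = n,
      (forall L : 'M[F]_(2,3), PG2_line L -> pts_on_line B L <= r)%N &
      exists2 L : 'M[F]_(2,3), PG2_line L & pts_on_line B L = r].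

(* Main.v *)
Require Import Defs.
From mathcomp Require Import all_boot all_order all_algebra all_field.
Set Implicit Arguments. Unset Strict Implicit. Unset Printing Implicit Defensive.
Import GRing.Theory.
Local Open Scope ring_scope.

Lemma line_normal (K : fieldType) (L : 'M[K]_(2,3)) : \rank L = 2%N ->
  exists2 c : 'rV[K]_3, c != 0 & forall u : 'rV[K]_3, (u <= L)%MS = (u *m c^T == 0).
Proof.
move=> rL.
set C := cokermx L.
have rC : \rank C^T = 1%N by rewrite mxrank_tr mxrank_coker rL.
have [i ci] : exists i, row i C^T != 0.
  apply/existsP; apply: contraT; rewrite negb_exists => /forallP H.
  have : C^T = 0 by apply/row_matrixP => i; rewrite row0; exact/eqP/negPn/H.
  by move=> CT0; move: rC; rewrite CT0 mxrank0.
exists (row i C^T) => // u.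
rewrite submxE -/C.
have sub : (row i C^T <= C^T)%MS by exact: row_sub.
have eq : (row i C^T == C^T)%MS.
  by rewrite -(mxrank_leqif_eq sub) rank_rV ci rC.
have [X defC] : exists X, C^T = X *m row i C^T.
  by apply/submxP; case/andP: eq.
apply/eqP/eqP => H.
- have : (u *m C)^T = 0 by rewrite H trmx0.
  rewrite trmx_mul => H2.
  have : row i (C^T *m u^T) = 0 by rewrite H2 row0.
  rewrite row_mul => H3.
  by rewrite -[u *m _]trmxK trmx_mul trmxK H3 trmx0.
- rewrite -/C -[C]trmxK defC trmx_mul mulmxA H mul0mx //.
Qed.

Notation F := 'F_31.
Lemma valF (n : nat) : val (n%:R : F) = (n %% 31)%N.
Proof. exact: (@val_Zp_nat 31). Qed.
Lemma Fval (x : F) : x = (val x)%:R.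
Proof. apply: val_inj; rewrite valF modn_small //; exact: ltn_ord. Qed.
Lemma natF_eq0 n : ((n%:R : F) == 0) = (n %% 31 == 0)%N.
Proof. by rewrite -valF. Qed.
Lemma natF_eq m n : ((m%:R : F) == n%:R) = (m %% 31 == n %% 31)%N.
Proof. by rewrite -!valF. Qed.

Definition trip := (nat * nat * nat)%type.
Definition mkv (s : trip) : 'rV[F]_3 :=
  \row_(i < 3) (nth 0%N [:: s.1.1; s.1.2; s.2] i)%:R.
Definition dotn (s t : trip) : nat := (s.1.1 * t.1.1 + s.1.2 * t.1.2 + s.2 * t.2)%N.

Lemma mx11_eq0 (K : nzRingType) (M : 'M[K]_1) : (M == 0) = (M 0 0 == 0).
Proof.
apply/eqP/eqP => [->|H]; first by rewrite mxE.
by apply/matrixP => i j; rewrite !ord1 H mxE.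
Qed.

Lemma mkv_dot s t : (mkv s *m (mkv t)^T == 0) = (dotn s t %% 31 == 0)%N.
Proof.
rewrite mx11_eq0 !mxE !big_ord_recr big_ord0 /= !mxE /= add0r -!natrM -!natrD.
by rewrite natF_eq0.
Qed.

Lemma mkv_entries s : [/\ mkv s 0 0 = (s.1.1)%:R, mkv s 0 1 = (s.1.2)%:R & mkv s 0 2%:R = (s.2)%:R].
Proof. by rewrite !mxE. Qed.

Definition lines : seq trip :=
  [seq (1, a, b)%N | a <- iota 0 31, b <- iota 0 31] ++
  [seq (0, 1, b)%N | b <- iota 0 31] ++ [:: (0, 0, 1)%N].

Definition mkt (a b c : nat) : trip := (a, b, c).
Lemma ltF (x : F) : (val x < 31)%N.
Proof. exact: ltn_ord. Qed.

Lemma norm_line (c : 'rV[F]_3) : c != 0 ->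
  exists2 t, t \in lines & exists2 k : F, k != 0 & c = k *: mkv t.
Proof.
move=> cn0.
have memi (x : F) : val x \in iota 0 31 by rewrite mem_iota /= ltF.
case: (c 0 0 =P 0) => c0.
  case: (c 0 1 =P 0) => c1.
    have c2 : c 0 2%:R != 0.
      apply: contraNneq cn0 => c2; apply/eqP/rowP => j; rewrite mxE.
      by case: j => [[|[|[|]]] Hj] //; [rewrite -c0|rewrite -c1|rewrite -c2]; congr (c 0 _); apply: val_inj.
    exists (0, 0, 1)%N; first by rewrite !mem_cat mem_seq1 eqxx !orbT.
    exists (c 0 2%:R) => //; apply/rowP => j; rewrite !mxE.
    case: j => [[|[|[|]]] Hj] //=; rewrite ?mulr0 ?mulr1.
    - by rewrite -c0; congr (c 0 _); apply: val_inj.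
    - by rewrite -c1; congr (c 0 _); apply: val_inj.
    - by congr (c 0 _); apply: val_inj.
  exists (mkt 0 1 (val ((c 0 1)^-1 * c 0 2%:R))).
    by rewrite !mem_cat; apply/orP; right; apply/orP; left; apply: map_f.
  exists (c 0 1); first exact/eqP.
  move: (Fval ((c 0 1)^-1 * c 0 2%:R)); move: (val _) => n Hn.
  apply/rowP => j; rewrite !mxE.
  case: j => [[|[|[|]]] Hj] //=; rewrite ?mulr0 ?mulr1.
  - by rewrite -c0; congr (c 0 _); apply: val_inj.
  - by congr (c 0 _); apply: val_inj.
  - rewrite -Hn mulrA mulfV ?mul1r; [by congr (c 0 _); apply: val_inj | exact/eqP].
exists (mkt 1 (val ((c 0 0)^-1 * c 0 1)) (val ((c 0 0)^-1 * c 0 2%:R))).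
  by rewrite mem_cat; apply/orP; left; apply: allpairs_f.
exists (c 0 0); first exact/eqP.
move: (Fval ((c 0 0)^-1 * c 0 2%:R)); move: (val _) => n2 Hn2.
move: (Fval ((c 0 0)^-1 * c 0 1)); move: (val _) => n1 Hn1.
apply/rowP => j; rewrite !mxE.
case: j => [[|[|[|]]] Hj] //=; rewrite ?mulr1.
- by congr (c 0 _); apply: val_inj.
- rewrite -Hn1 mulrA mulfV ?mul1r; [by congr (c 0 _); apply: val_inj | exact/eqP].
- rewrite -Hn2 mulrA mulfV ?mul1r; [by congr (c 0 _); apply: val_inj | exact/eqP].
Qed.

Definition small (s : trip) := [&& s.1.1 < 31, s.1.2 < 31 & s.2 < 31]%N.
Definition normt (s : trip) :=
  [|| s.1.1 == 1, (s.1.1 == 0) && (s.1.2 == 1) | [&& s.1.1 == 0, s.1.2 == 0 & s.2 == 1]]%N.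

Lemma mkv_inj s s' : small s -> small s' -> mkv s = mkv s' -> s = s'.
Proof.
case: s => [[a b] c]; case: s' => [[a' b'] c'] /and3P [ha hb hc] /and3P [ha' hb' hc'] E.
have := congr1 (fun v : 'rV[F]_3 => v 0 0) E; have := congr1 (fun v : 'rV[F]_3 => v 0 1) E;
have := congr1 (fun v : 'rV[F]_3 => v 0 2%:R) E; rewrite !mxE /= => /eqP e2 /eqP e1 /eqP e0.
move: e0 e1 e2; rewrite !natF_eq !modn_small // => /eqP-> /eqP-> /eqP-> //.
Qed.

Lemma mkv_prop s s' (k : F) : small s -> small s' -> normt s -> normt s' ->
  mkv s = k *: mkv s' -> s = s'.
Proof.
move=> hs hs' ns ns' E.
have := congr1 (fun v : 'rV[F]_3 => v 0 0) E; have := congr1 (fun v : 'rV[F]_3 => v 0 1) E;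
have := congr1 (fun v : 'rV[F]_3 => v 0 2%:R) E; rewrite !mxE /= => e2 e1 e0.
suff k1 : k = 1 by apply: mkv_inj => //; rewrite E k1 scale1r.
clear E hs hs'; case: s ns e0 e1 e2 => [[a b] c]; case: s' ns' => [[a' b'] c'].
rewrite /normt /=.
case/orP=> [/eqP->|/orP[/andP[/eqP-> /eqP->]|/and3P[/eqP-> /eqP-> /eqP->]]];
case/orP=> [/eqP->|/orP[/andP[/eqP-> /eqP->]|/and3P[/eqP-> /eqP-> /eqP->]]];
rewrite ?mulr1 ?mulr0 => e0 e1 e2 //;
try (by move/eqP: e0; rewrite oner_eq0);
try (by move/eqP: e1; rewrite oner_eq0);
try (by move/eqP: e2; rewrite oner_eq0);
try (by rewrite -e0; exact: eqxx).
all: try (by move: e1; rewrite -e0 mul0r => /eqP; rewrite oner_eq0).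
all: try (by move: e2; rewrite -e0 mul0r => /eqP; rewrite oner_eq0).
all: try (by move: e2; rewrite -e1 mul0r => /eqP; rewrite oner_eq0).
all: try (by rewrite e1).
all: try (by rewrite e2).
Qed.

Definition P : seq trip := [::
(1,0,1);
(1,0,3);
(1,0,7);
(1,0,9);
(1,0,11);
(1,0,13);
(1,0,15);
(1,0,21);
(1,0,23);
(1,0,25);
(1,0,27);
(1,0,29);
(1,0,2);
(1,0,6);
(1,0,8);
(1,0,12);
(1,0,18);
(1,0,20);
(1,0,22);
(1,0,24);
(1,0,26);
(1,0,28);
(1,0,30);
(1,1,1);
(1,1,3);
(1,1,5);
(1,1,7);
(1,1,9);
(1,1,11);
(1,1,13);
(1,1,21);
(1,1,23);
(1,1,25);
(1,1,27);
(1,1,29);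
(1,1,0);
(1,1,2);
(1,1,4);
(1,1,6);
(1,1,8);
(1,1,12);
(1,1,16);
(1,1,20);
(1,1,22);
(1,1,26);
(1,1,28);
(1,1,30);
(1,2,1);
(1,2,3);
(1,2,7);
(1,2,11);
(1,2,13);
(1,2,15);
(1,2,19);
(1,2,21);
(1,2,23);
(1,2,27);
(1,2,2);
(1,2,4);
(1,2,6);
(1,2,8);
(1,2,12);
(1,2,14);
(1,2,20);
(1,2,22);
(1,2,24);
(1,2,26);
(1,2,28);
(1,2,30);
(1,3,1);
(1,3,5);
(1,3,7);
(1,3,9);
(1,3,11);
(1,3,13);
(1,3,15);
(1,3,21);
(1,3,25);
(1,3,29);
(1,3,0);
(1,3,2);
(1,3,6);
(1,3,8);
(1,3,12);
(1,3,14);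
(1,3,16);
(1,3,18);
(1,3,20);
(1,3,24);
(1,3,26);
(1,3,28);
(1,3,30);
(1,4,1);
(1,4,3);
(1,4,5);
(1,4,7);
(1,4,9);
(1,4,11);
(1,4,13);
(1,4,15);
(1,4,19);
(1,4,21);
(1,4,25);
(1,4,27);
(1,4,29);
(1,4,0);
(1,4,2);
(1,4,4);
(1,4,6);
(1,4,12);
(1,4,16);
(1,4,22);
(1,4,24);
(1,4,26);
(1,4,28);
(1,5,1);
(1,5,3);
(1,5,5);
(1,5,7);
(1,5,9);
(1,5,11);
(1,5,15);
(1,5,23);
(1,5,27);
(1,5,29);
(1,5,0);
(1,5,2);
(1,5,4);
(1,5,6);
(1,5,8);
(1,5,12);
(1,5,14);
(1,5,16);
(1,5,18);
(1,5,20);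
(1,5,22);
(1,5,26);
(1,5,30);
(1,6,1);
(1,6,7);
(1,6,9);
(1,6,11);
(1,6,13);
(1,6,19);
(1,6,21);
(1,6,23);
(1,6,25);
(1,6,27);
(1,6,29);
(1,6,0);
(1,6,2);
(1,6,4);
(1,6,6);
(1,6,8);
(1,6,12);
(1,6,14);
(1,6,16);
(1,6,24);
(1,6,26);
(1,6,28);
(1,6,30);
(1,7,1);
(1,7,3);
(1,7,5);
(1,7,7);
(1,7,9);
(1,7,11);
(1,7,19);
(1,7,25);
(1,7,29);
(1,7,0);
(1,7,4);
(1,7,6);
(1,7,8);
(1,7,12);
(1,7,14);
(1,7,16);
(1,7,18);
(1,7,20);
(1,7,22);
(1,7,24);
(1,7,26);
(1,7,28);
(1,7,30);
(1,8,1);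
(1,8,3);
(1,8,5);
(1,8,7);
(1,8,9);
(1,8,11);
(1,8,13);
(1,8,15);
(1,8,19);
(1,8,21);
(1,8,25);
(1,8,27);
(1,8,29);
(1,8,0);
(1,8,2);
(1,8,4);
(1,8,6);
(1,8,8);
(1,8,12);
(1,8,14);
(1,8,16);
(1,8,18);
(1,8,26);
(1,8,30);
(1,9,1);
(1,9,3);
(1,9,9);
(1,9,13);
(1,9,15);
(1,9,19);
(1,9,21);
(1,9,27);
(1,9,29);
(1,9,0);
(1,9,4);
(1,9,6);
(1,9,8);
(1,9,12);
(1,9,14);
(1,9,16);
(1,9,18);
(1,9,20);
(1,9,22);
(1,9,24);
(1,9,26);
(1,9,28);
(1,9,30);
(1,10,3);
(1,10,5);
(1,10,9);
(1,10,13);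
(1,10,19);
(1,10,21);
(1,10,23);
(1,10,27);
(1,10,29);
(1,10,2);
(1,10,4);
(1,10,6);
(1,10,8);
(1,10,14);
(1,10,20);
(1,10,22);
(1,10,28);
(1,11,1);
(1,11,3);
(1,11,5);
(1,11,7);
(1,11,9);
(1,11,11);
(1,11,13);
(1,11,15);
(1,11,19);
(1,11,21);
(1,11,23);
(1,11,29);
(1,11,0);
(1,11,2);
(1,11,4);
(1,11,6);
(1,11,8);
(1,11,14);
(1,11,16);
(1,11,18);
(1,11,20);
(1,11,24);
(1,11,28);
(1,11,30);
(1,12,3);
(1,12,5);
(1,12,7);
(1,12,9);
(1,12,11);
(1,12,13);
(1,12,15);
(1,12,19);
(1,12,23);
(1,12,25);
(1,12,27);
(1,12,29);
(1,12,0);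
(1,12,2);
(1,12,4);
(1,12,8);
(1,12,12);
(1,12,14);
(1,12,16);
(1,12,18);
(1,12,20);
(1,12,22);
(1,12,24);
(1,13,1);
(1,13,3);
(1,13,5);
(1,13,7);
(1,13,9);
(1,13,13);
(1,13,15);
(1,13,19);
(1,13,21);
(1,13,23);
(1,13,25);
(1,13,0);
(1,13,2);
(1,13,4);
(1,13,6);
(1,13,8);
(1,13,12);
(1,13,14);
(1,13,18);
(1,13,20);
(1,13,24);
(1,13,26);
(1,13,28);
(1,13,30);
(1,14,1);
(1,14,3);
(1,14,5);
(1,14,7);
(1,14,9);
(1,14,13);
(1,14,15);
(1,14,19);
(1,14,23);
(1,14,25);
(1,14,29);
(1,14,0);
(1,14,2);
(1,14,6);
(1,14,8);
(1,14,12);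
(1,14,14);
(1,14,16);
(1,14,18);
(1,14,20);
(1,14,22);
(1,14,26);
(1,15,3);
(1,15,5);
(1,15,7);
(1,15,9);
(1,15,11);
(1,15,13);
(1,15,15);
(1,15,19);
(1,15,21);
(1,15,23);
(1,15,25);
(1,15,27);
(1,15,2);
(1,15,4);
(1,15,8);
(1,15,14);
(1,15,16);
(1,15,18);
(1,15,20);
(1,15,24);
(1,15,26);
(1,15,28);
(1,15,30);
(1,16,3);
(1,16,5);
(1,16,7);
(1,16,11);
(1,16,15);
(1,16,19);
(1,16,21);
(1,16,23);
(1,16,25);
(1,16,27);
(1,16,29);
(1,16,0);
(1,16,2);
(1,16,4);
(1,16,8);
(1,16,12);
(1,16,14);
(1,16,16);
(1,16,18);
(1,16,20);
(1,16,22);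
(1,16,24);
(1,16,26);
(1,16,28);
(1,17,1);
(1,17,3);
(1,17,5);
(1,17,7);
(1,17,13);
(1,17,15);
(1,17,19);
(1,17,21);
(1,17,23);
(1,17,25);
(1,17,29);
(1,17,4);
(1,17,6);
(1,17,8);
(1,17,12);
(1,17,14);
(1,17,16);
(1,17,22);
(1,17,24);
(1,17,26);
(1,17,28);
(1,17,30);
(1,18,5);
(1,18,7);
(1,18,9);
(1,18,11);
(1,18,13);
(1,18,15);
(1,18,19);
(1,18,21);
(1,18,23);
(1,18,27);
(1,18,29);
(1,18,0);
(1,18,2);
(1,18,4);
(1,18,6);
(1,18,8);
(1,18,12);
(1,18,18);
(1,18,20);
(1,18,24);
(1,18,26);
(1,18,28);
(1,19,3);
(1,19,5);
(1,19,7);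
(1,19,11);
(1,19,13);
(1,19,15);
(1,19,19);
(1,19,23);
(1,19,25);
(1,19,27);
(1,19,29);
(1,19,0);
(1,19,6);
(1,19,8);
(1,19,12);
(1,19,14);
(1,19,16);
(1,19,18);
(1,19,20);
(1,19,22);
(1,19,24);
(1,19,26);
(1,19,28);
(1,19,30);
(1,20,1);
(1,20,7);
(1,20,9);
(1,20,11);
(1,20,13);
(1,20,15);
(1,20,21);
(1,20,23);
(1,20,25);
(1,20,27);
(1,20,29);
(1,20,0);
(1,20,2);
(1,20,4);
(1,20,6);
(1,20,8);
(1,20,14);
(1,20,16);
(1,20,18);
(1,20,20);
(1,20,22);
(1,20,24);
(1,20,28);
(1,20,30);
(1,21,1);
(1,21,3);
(1,21,5);
(1,21,9);
(1,21,11);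
(1,21,13);
(1,21,15);
(1,21,19);
(1,21,21);
(1,21,23);
(1,21,25);
(1,21,27);
(1,21,2);
(1,21,8);
(1,21,12);
(1,21,14);
(1,21,16);
(1,21,18);
(1,21,20);
(1,21,22);
(1,21,24);
(1,21,26);
(1,21,28);
(1,21,30);
(1,22,1);
(1,22,3);
(1,22,9);
(1,22,11);
(1,22,13);
(1,22,15);
(1,22,19);
(1,22,21);
(1,22,23);
(1,22,25);
(1,22,27);
(1,22,29);
(1,22,0);
(1,22,4);
(1,22,6);
(1,22,12);
(1,22,14);
(1,22,16);
(1,22,18);
(1,22,22);
(1,22,26);
(1,22,28);
(1,22,30);
(1,23,1);
(1,23,3);
(1,23,5);
(1,23,7);
(1,23,9);
(1,23,13);
(1,23,15);
(1,23,19);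
(1,23,21);
(1,23,23);
(1,23,25);
(1,23,27);
(1,23,29);
(1,23,0);
(1,23,2);
(1,23,4);
(1,23,12);
(1,23,14);
(1,23,16);
(1,23,20);
(1,23,22);
(1,23,24);
(1,23,26);
(1,23,30);
(1,24,3);
(1,24,5);
(1,24,11);
(1,24,13);
(1,24,19);
(1,24,21);
(1,24,25);
(1,24,27);
(1,24,0);
(1,24,2);
(1,24,4);
(1,24,6);
(1,24,8);
(1,24,12);
(1,24,14);
(1,24,16);
(1,24,18);
(1,24,20);
(1,24,22);
(1,24,24);
(1,24,26);
(1,24,30);
(1,25,1);
(1,25,3);
(1,25,5);
(1,25,9);
(1,25,11);
(1,25,13);
(1,25,15);
(1,25,19);
(1,25,21);
(1,25,23);
(1,25,25);
(1,25,27);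
(1,25,29);
(1,25,0);
(1,25,4);
(1,25,6);
(1,25,12);
(1,25,14);
(1,25,22);
(1,25,24);
(1,25,26);
(1,25,30);
(1,26,1);
(1,26,5);
(1,26,7);
(1,26,15);
(1,26,19);
(1,26,21);
(1,26,23);
(1,26,27);
(1,26,29);
(1,26,0);
(1,26,2);
(1,26,4);
(1,26,6);
(1,26,8);
(1,26,12);
(1,26,14);
(1,26,16);
(1,26,18);
(1,26,20);
(1,26,22);
(1,26,24);
(1,26,26);
(1,26,28);
(1,26,30);
(1,27,1);
(1,27,3);
(1,27,5);
(1,27,7);
(1,27,9);
(1,27,11);
(1,27,13);
(1,27,15);
(1,27,19);
(1,27,23);
(1,27,25);
(1,27,0);
(1,27,2);
(1,27,4);
(1,27,6);
(1,27,14);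
(1,27,16);
(1,27,18);
(1,27,20);
(1,27,22);
(1,27,24);
(1,27,26);
(1,27,28);
(1,28,1);
(1,28,5);
(1,28,7);
(1,28,9);
(1,28,15);
(1,28,19);
(1,28,21);
(1,28,23);
(1,28,25);
(1,28,27);
(1,28,29);
(1,28,0);
(1,28,2);
(1,28,12);
(1,28,14);
(1,28,16);
(1,28,18);
(1,28,20);
(1,28,22);
(1,28,24);
(1,28,26);
(1,28,28);
(1,28,30);
(1,29,1);
(1,29,3);
(1,29,5);
(1,29,7);
(1,29,11);
(1,29,13);
(1,29,15);
(1,29,21);
(1,29,23);
(1,29,25);
(1,29,27);
(1,29,0);
(1,29,2);
(1,29,4);
(1,29,6);
(1,29,8);
(1,29,18);
(1,29,20);
(1,29,22);
(1,29,28);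
(1,29,30);
(1,30,1);
(1,30,3);
(1,30,5);
(1,30,7);
(1,30,9);
(1,30,11);
(1,30,19);
(1,30,21);
(1,30,23);
(1,30,25);
(1,30,27);
(1,30,29);
(1,30,0);
(1,30,2);
(1,30,4);
(1,30,6);
(1,30,8);
(1,30,12);
(1,30,16);
(1,30,18);
(1,30,20);
(1,30,22);
(1,30,28);
(1,30,30);
(0,1,2);
(0,1,4);
(0,1,6);
(0,1,8);
(0,1,12);
(0,1,16);
(0,1,20);
(0,1,22);
(0,1,24);
(0,1,28);
(0,1,30);
(0,1,3);
(0,1,7);
(0,1,9);
(0,1,11);
(0,1,13);
(0,1,15);
(0,1,17);
(0,1,19);
(0,1,21);
(0,1,23);
(0,1,25);
(0,1,29);
(0,0,1)]%N.

Lemma card_list (T : finType) (s : seq T) (p : pred T) : uniq s ->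
  #|[set u in [set x | x \in s] | p u]| = count p s.
Proof.
move=> us; rewrite -size_filter; have/card_uniqP <- := filter_uniq p us.
by apply: eq_card => x; rewrite !inE mem_filter andbC.
Qed.

Lemma dot_scale (s : trip) (k : F) t : k != 0 ->
  (mkv s *m (k *: mkv t)^T == 0) = (dotn s t %% 31 == 0)%N.
Proof.
move=> kn0; rewrite linearZ /= -scalemxAr scaler_eq0 (negbTE kn0) /=.
exact: mkv_dot.
Qed.

Lemma mkv_nz s : normt s -> mkv s != 0.
Proof.
case: s => [[a b] c]; rewrite /normt /= => ns; apply/eqP => E.
have := congr1 (fun v : 'rV[F]_3 => v 0 0) E; have := congr1 (fun v : 'rV[F]_3 => v 0 1) E;
have := congr1 (fun v : 'rV[F]_3 => v 0 2%:R) E; rewrite !mxE /= => e2 e1 e0.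
move: ns; case/orP=> [/eqP Ha|/orP[/andP[_ /eqP Hb]|/and3P[_ _ /eqP Hc]]].
- by move: e0; rewrite Ha => /eqP; rewrite oner_eq0.
- by move: e1; rewrite Hb => /eqP; rewrite oner_eq0.
- by move: e2; rewrite Hc => /eqP; rewrite oner_eq0.
Qed.


Definition mtab : seq (seq nat) := [:: [:: 0; 0; 0; 0; 0; 0; 0; 0; 0; 0; 0; 0; 0; 0; 0; 0; 0; 0; 0; 0; 0; 0; 0; 0; 0; 0; 0; 0; 0; 0; 0];
 [:: 0; 1; 2; 3; 4; 5; 6; 7; 8; 9; 10; 11; 12; 13; 14; 15; 16; 17; 18; 19; 20; 21; 22; 23; 24; 25; 26; 27; 28; 29; 30];
 [:: 0; 2; 4; 6; 8; 10; 12; 14; 16; 18; 20; 22; 24; 26; 28; 30; 1; 3; 5; 7; 9; 11; 13; 15; 17; 19; 21; 23; 25; 27; 29];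
 [:: 0; 3; 6; 9; 12; 15; 18; 21; 24; 27; 30; 2; 5; 8; 11; 14; 17; 20; 23; 26; 29; 1; 4; 7; 10; 13; 16; 19; 22; 25; 28];
 [:: 0; 4; 8; 12; 16; 20; 24; 28; 1; 5; 9; 13; 17; 21; 25; 29; 2; 6; 10; 14; 18; 22; 26; 30; 3; 7; 11; 15; 19; 23; 27];
 [:: 0; 5; 10; 15; 20; 25; 30; 4; 9; 14; 19; 24; 29; 3; 8; 13; 18; 23; 28; 2; 7; 12; 17; 22; 27; 1; 6; 11; 16; 21; 26];
 [:: 0; 6; 12; 18; 24; 30; 5; 11; 17; 23; 29; 4; 10; 16; 22; 28; 3; 9; 15; 21; 27; 2; 8; 14; 20; 26; 1; 7; 13; 19; 25];
 [:: 0; 7; 14; 21; 28; 4; 11; 18; 25; 1; 8; 15; 22; 29; 5; 12; 19; 26; 2; 9; 16; 23; 30; 6; 13; 20; 27; 3; 10; 17; 24];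
 [:: 0; 8; 16; 24; 1; 9; 17; 25; 2; 10; 18; 26; 3; 11; 19; 27; 4; 12; 20; 28; 5; 13; 21; 29; 6; 14; 22; 30; 7; 15; 23];
 [:: 0; 9; 18; 27; 5; 14; 23; 1; 10; 19; 28; 6; 15; 24; 2; 11; 20; 29; 7; 16; 25; 3; 12; 21; 30; 8; 17; 26; 4; 13; 22];
 [:: 0; 10; 20; 30; 9; 19; 29; 8; 18; 28; 7; 17; 27; 6; 16; 26; 5; 15; 25; 4; 14; 24; 3; 13; 23; 2; 12; 22; 1; 11; 21];
 [:: 0; 11; 22; 2; 13; 24; 4; 15; 26; 6; 17; 28; 8; 19; 30; 10; 21; 1; 12; 23; 3; 14; 25; 5; 16; 27; 7; 18; 29; 9; 20];
 [:: 0; 12; 24; 5; 17; 29; 10; 22; 3; 15; 27; 8; 20; 1; 13; 25; 6; 18; 30; 11; 23; 4; 16; 28; 9; 21; 2; 14; 26; 7; 19];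
 [:: 0; 13; 26; 8; 21; 3; 16; 29; 11; 24; 6; 19; 1; 14; 27; 9; 22; 4; 17; 30; 12; 25; 7; 20; 2; 15; 28; 10; 23; 5; 18];
 [:: 0; 14; 28; 11; 25; 8; 22; 5; 19; 2; 16; 30; 13; 27; 10; 24; 7; 21; 4; 18; 1; 15; 29; 12; 26; 9; 23; 6; 20; 3; 17];
 [:: 0; 15; 30; 14; 29; 13; 28; 12; 27; 11; 26; 10; 25; 9; 24; 8; 23; 7; 22; 6; 21; 5; 20; 4; 19; 3; 18; 2; 17; 1; 16];
 [:: 0; 16; 1; 17; 2; 18; 3; 19; 4; 20; 5; 21; 6; 22; 7; 23; 8; 24; 9; 25; 10; 26; 11; 27; 12; 28; 13; 29; 14; 30; 15];
 [:: 0; 17; 3; 20; 6; 23; 9; 26; 12; 29; 15; 1; 18; 4; 21; 7; 24; 10; 27; 13; 30; 16; 2; 19; 5; 22; 8; 25; 11; 28; 14];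
 [:: 0; 18; 5; 23; 10; 28; 15; 2; 20; 7; 25; 12; 30; 17; 4; 22; 9; 27; 14; 1; 19; 6; 24; 11; 29; 16; 3; 21; 8; 26; 13];
 [:: 0; 19; 7; 26; 14; 2; 21; 9; 28; 16; 4; 23; 11; 30; 18; 6; 25; 13; 1; 20; 8; 27; 15; 3; 22; 10; 29; 17; 5; 24; 12];
 [:: 0; 20; 9; 29; 18; 7; 27; 16; 5; 25; 14; 3; 23; 12; 1; 21; 10; 30; 19; 8; 28; 17; 6; 26; 15; 4; 24; 13; 2; 22; 11];
 [:: 0; 21; 11; 1; 22; 12; 2; 23; 13; 3; 24; 14; 4; 25; 15; 5; 26; 16; 6; 27; 17; 7; 28; 18; 8; 29; 19; 9; 30; 20; 10];
 [:: 0; 22; 13; 4; 26; 17; 8; 30; 21; 12; 3; 25; 16; 7; 29; 20; 11; 2; 24; 15; 6; 28; 19; 10; 1; 23; 14; 5; 27; 18; 9];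
 [:: 0; 23; 15; 7; 30; 22; 14; 6; 29; 21; 13; 5; 28; 20; 12; 4; 27; 19; 11; 3; 26; 18; 10; 2; 25; 17; 9; 1; 24; 16; 8];
 [:: 0; 24; 17; 10; 3; 27; 20; 13; 6; 30; 23; 16; 9; 2; 26; 19; 12; 5; 29; 22; 15; 8; 1; 25; 18; 11; 4; 28; 21; 14; 7];
 [:: 0; 25; 19; 13; 7; 1; 26; 20; 14; 8; 2; 27; 21; 15; 9; 3; 28; 22; 16; 10; 4; 29; 23; 17; 11; 5; 30; 24; 18; 12; 6];
 [:: 0; 26; 21; 16; 11; 6; 1; 27; 22; 17; 12; 7; 2; 28; 23; 18; 13; 8; 3; 29; 24; 19; 14; 9; 4; 30; 25; 20; 15; 10; 5];
 [:: 0; 27; 23; 19; 15; 11; 7; 3; 30; 26; 22; 18; 14; 10; 6; 2; 29; 25; 21; 17; 13; 9; 5; 1; 28; 24; 20; 16; 12; 8; 4];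
 [:: 0; 28; 25; 22; 19; 16; 13; 10; 7; 4; 1; 29; 26; 23; 20; 17; 14; 11; 8; 5; 2; 30; 27; 24; 21; 18; 15; 12; 9; 6; 3];
 [:: 0; 29; 27; 25; 23; 21; 19; 17; 15; 13; 11; 9; 7; 5; 3; 1; 30; 28; 26; 24; 22; 20; 18; 16; 14; 12; 10; 8; 6; 4; 2];
 [:: 0; 30; 29; 28; 27; 26; 25; 24; 23; 22; 21; 20; 19; 18; 17; 16; 15; 14; 13; 12; 11; 10; 9; 8; 7; 6; 5; 4; 3; 2; 1]].
Definition mulm (a b : nat) : nat := nth 0%N (nth [::] mtab a) b.
Definition addm (a b : nat) : nat := let c := (a + b)%N in if (c < 31)%N then c else (c - 31)%N.
Definition dotm (s t : trip) : nat := addm (addm (mulm s.1.1 t.1.1) (mulm s.1.2 t.1.2)) (mulm s.2 t.2).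

Lemma mulm_ok_all : (all (fun a => all (fun b => mulm a b == a * b %% 31) (iota 0 31)) (iota 0 31))%N.
Proof. by vm_compute. Qed.
Lemma addm_ok_all : (all (fun a => all (fun b => addm a b == (a + b) %% 31) (iota 0 31)) (iota 0 31))%N.
Proof. by vm_compute. Qed.

Lemma mulm_ok a b : (a < 31)%N -> (b < 31)%N -> mulm a b = (a * b %% 31)%N.
Proof.
move=> ha hb; apply/eqP.
move/allP: mulm_ok_all => /(_ a); rewrite mem_iota ha => /(_ isT) /allP /(_ b).
by rewrite mem_iota hb => /(_ isT).
Qed.
Lemma addm_ok a b : (a < 31)%N -> (b < 31)%N -> addm a b = ((a + b) %% 31)%N.
Proof.
move=> ha hb; apply/eqP.
move/allP: addm_ok_all => /(_ a); rewrite mem_iota ha => /(_ isT) /allP /(_ b).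
by rewrite mem_iota hb => /(_ isT).
Qed.

Lemma dotm_ok s t : small s -> small t -> dotm s t = (dotn s t %% 31)%N.
Proof.
case: s => [[a b] c]; case: t => [[a' b'] c'] /and3P [ha hb hc] /and3P [ha' hb' hc'].
rewrite /dotm /dotn /= !mulm_ok //.
rewrite [addm (_ %% 31) _]addm_ok ?ltn_pmod // addm_ok ?ltn_pmod //.
by rewrite modnDm -addnA modnDml addnCA modnDml addnCA addnA.
Qed.

Lemma lines_small : all small lines. Proof. by vm_compute. Qed.

Definition Bset : {set 'rV[F]_3} := [set u | u \in map mkv P].

Definition chk_pts := all (fun s => small s && normt s) P.
Definition chk_lines := (all (fun t => count (fun s => dotm s t == 0) P <= 25) lines)%N.
Definition chk_line0 := (count (fun s => dotm s (0,0,1) == 0) P == 25)%N.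
Definition chk_lines0 := all (fun t : trip => ((t.1.1 %% 31 == 0) && (t.1.2 %% 31 == 0)) ==> (t == (0,0,1)))%N lines.

Lemma chk_pts_ok : chk_pts. Proof. by vm_compute. Qed.
Lemma chk_uniq_ok : uniq P. Proof. by vm_compute. Qed.
Lemma chk_size_ok : size P = 734%N. Proof. by vm_compute. Qed.
Lemma chk_lines_ok : chk_lines. Proof. by vm_compute. Qed.
Lemma chk_line0_ok : chk_line0. Proof. by vm_compute. Qed.
Lemma chk_lines0_ok : chk_lines0. Proof. by vm_compute. Qed.

Lemma inPP s : s \in P -> small s && normt s.
Proof. by move=> sP; move/allP: chk_pts_ok => /(_ s sP). Qed.

Lemma uniq_mkvP : uniq (map mkv P).
Proof.
rewrite map_inj_in_uniq ?chk_uniq_ok // => s s' sP s'P.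
by apply: mkv_inj; [case/andP: (inPP sP) | case/andP: (inPP s'P)].
Qed.

Lemma count_conv t : small t ->
  count (fun s => dotn s t %% 31 == 0)%N P = count (fun s => dotm s t == 0)%N P.
Proof.
move=> ht; apply: eq_in_count => s sP /=.
by rewrite dotm_ok //; case/andP: (inPP sP).
Qed.

Lemma count_line (L : 'M[F]_(2,3)) : \rank L = 2%N ->
  exists2 t, t \in lines & pts_on_line Bset L = count (fun s => dotn s t %% 31 == 0)%N P.
Proof.
move=> rL; have [c cn0 Hc] := line_normal rL.
have [t tl [k kn0 ck]] := norm_line cn0.
exists t => //.
rewrite /pts_on_line /Bset card_list ?uniq_mkvP // count_map.
apply: eq_count => s /=; by rewrite Hc ck dot_scale.
Qed.

Definition L0 : 'M[F]_(2,3) := pid_mx 2.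

Theorem mainTheorem16 :
  exists B : {set 'rV['F_31]_3}, is_arc 734 25 B.
Proof.
exists Bset; split.
- move=> u; rewrite in_set => /mapP [s sP ->].
  by apply: mkv_nz; case/andP: (inPP sP).
- move=> u v; rewrite !in_set => /mapP [s sP ->] /mapP [s' s'P ->] /andP [Hle _].
  have [D HD] := submxP Hle.
  apply/f_equal/(@mkv_prop _ _ (D 0 0)); try by [case/andP: (inPP sP)|case/andP: (inPP s'P)].
  by rewrite HD {1}[D]mx11_scalar mul_scalar_mx.
- rewrite cardsE -chk_size_ok -(size_map mkv); exact/card_uniqP/uniq_mkvP.
- move=> L /eqP rL; have [t tl ->] := count_line rL.
  rewrite count_conv; last by move/allP: lines_small => /(_ t tl).
  by move/allP: chk_lines_ok => /(_ t tl).
- exists L0; first by rewrite /PG2_line /L0 rank_pid_mx.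
  have rL : \rank L0 = 2%N by rewrite /L0 rank_pid_mx.
  have [c cn0 Hc] := line_normal rL.
  have [t tl [k kn0 ck]] := norm_line cn0.
  have H s : (mkv s <= L0)%MS = (dotn s t %% 31 == 0)%N.
    by rewrite Hc ck dot_scale.
  have e1 : (mkv (1,0,0)%N <= L0)%MS.
    have -> : mkv (1,0,0)%N = row 0 L0.
      by apply/rowP => j; rewrite /L0 !mxE; case: j => [[|[|[|]]] Hj].
    exact: row_sub.
  have e2 : (mkv (0,1,0)%N <= L0)%MS.
    have -> : mkv (0,1,0)%N = row 1 L0.
      by apply/rowP => j; rewrite /L0 !mxE; case: j => [[|[|[|]]] Hj].
    exact: row_sub.
  rewrite H in e1; rewrite H in e2.
  have tE : t = (0,0,1)%N.
    move/allP: chk_lines0_ok => /(_ t tl) /implyP Himp; apply/eqP/Himp.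
    move: e1 e2; case: t {tl ck H Himp} => [[a b] d]; rewrite /dotn /=.
    by rewrite !mul1n !mul0n !add0n !addn0 => -> ->.
  rewrite /pts_on_line /Bset card_list ?uniq_mkvP // count_map.
  apply/eqP; rewrite -[X in _ == X](eqP chk_line0_ok) -count_conv // -tE; apply/eqP.
  by apply: eq_count => s /=; rewrite H.
Qed.
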